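(* Let $\mathscr N$ be a weakly reversible chemical reaction network such that every decomposition $\mathscr N=\mathscr N_1\cup\cdots\cup\mathscr N_k$ satisfies $\delta=\delta_1+\cdots+\delta_k$. Then every independent decomposition of $\mathscr N$ is weakly reversible.
   Context: A chemical reaction network (CRN) $\mathscr N=(\mathscr S,\mathscr C,\mathscr R)$ consists of: - a finite set $\mathscr S$ of species; - a finite set $\mathscr C\subseteq\mathbb R^{\mathscr S}_{\ge0}$ of complexes; - a set $\mathscr R\subseteq\mathscr C\times\mathscr C$ of reactions (a directed graph on $\mathscr C$), with no reaction $y\to y$ and every complex occurring in some reaction. Linkage classes are the connected components of the underlying undirected graph. The network is weakly reversible if every linkage class is strongly connected. The deficiency is $\delta=n-l-s$, where: - $n$ is the number of complexes; - $l$ is the number of linkage classes; - $s=\dim S$, with $S=\operatorname{span}\{y'-y: y\to y'\in\mathscr R\}$ the stoichiometric subspace. A decomposition $\mathscr N=\mathscr N_1\cup\cdots\cup\mathscr N_k$ is the set of subnetworks induced by a partition $\{\mathscr R_1,\ldots,\mathscr R_k\}$ of $\mathscr R$. Each $\mathscr N_i$ has reactions $\mathscr R_i$ and the complexes occurring in them, with deficiency $\delta_i=n_i-l_i-s_i$. The decomposition is independent if $S=S_1\oplus\cdots\oplus S_k$. It is weakly reversible if every $\mathscr N_i$ is weakly reversible. *)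

(* Defs.v *)
From HB Require Import structures.
From mathcomp Require Import all_boot all_order all_algebra.
Set Implicit Arguments. Unset Strict Implicit. Unset Printing Implicit Defensive.
Import Order.TTheory GRing.Theory Num.Theory.
Local Open Scope ring_scope.

Section CRN.
Variables (R : realFieldType) (m : nat).
(* Species are indexed by 'I_m; a complex is a row vector in R^m. *)
Definition complex := 'rV[R]_m.
Definition reaction := (complex * complex)%type.

(* A CRN is given by its (finite, duplicate-free) list of reactions;
   the complexes are exactly those occurring in some reaction. *)
Definition is_crn (rs : seq reaction) : bool :=
  [&& uniq rs,
      all (fun r : reaction => r.1 != r.2) rs &
      all (fun r : reaction => [forall j, (0 <= r.1 0 j) && (0 <= r.2 0 j)]) rs].

Definition complexes (rs : seq reaction) : seq complex :=
  undup (flatten [seq [:: r.1; r.2] | r <- rs]).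

Definition ncompl (rs : seq reaction) : nat := size (complexes rs).

Definition rgraph (rs : seq reaction) : rel 'I_(ncompl rs) :=
  fun i j => (nth 0 (complexes rs) i, nth 0 (complexes rs) j) \in rs.

Definition ugraph (rs : seq reaction) : rel 'I_(ncompl rs) :=
  fun i j => rgraph i j || rgraph j i.

Definition nlink (rs : seq reaction) : nat :=
  #|[set [set j | connect (@ugraph rs) i j] | i : 'I_(ncompl rs)]|.

Definition weakly_reversible (rs : seq reaction) : Prop :=
  forall i j : 'I_(ncompl rs), connect (@ugraph rs) i j -> connect (@rgraph rs) i j.

(* stoichiometric matrix: its row space is the stoichiometric subspace S *)
Definition stoich (rs : seq reaction) : 'M[R]_(size rs, m) :=
  \matrix_(i < size rs) ((nth (0, 0) rs i).2 - (nth (0, 0) rs i).1).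

Definition sdim (rs : seq reaction) : nat := \rank (stoich rs).

Definition deficiency (rs : seq reaction) : int :=
  (ncompl rs)%:Z - (nlink rs)%:Z - (sdim rs)%:Z.

(* A decomposition into k subnetworks: a partition of the reactions given by
   a labelling f with every block nonempty; block i is the subnetwork
   with reactions R_i. *)
Definition block (rs : seq reaction) (k : nat) (f : reaction -> 'I_k) (i : 'I_k)
  : seq reaction := [seq r <- rs | f r == i].

Definition is_decomposition (rs : seq reaction) (k : nat) (f : reaction -> 'I_k) : Prop :=
  forall i : 'I_k, block rs f i != [::].

Definition independent (rs : seq reaction) (k : nat) (f : reaction -> 'I_k) : Prop :=
  (stoich rs == \sum_(i < k) <<stoich (block rs f i)>>)%MS
  /\ mxdirect (\sum_(i < k) <<stoich (block rs f i)>>)%MS.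

Definition weakly_reversible_decomposition
  (rs : seq reaction) (k : nat) (f : reaction -> 'I_k) : Prop :=
  forall i : 'I_k, weakly_reversible (block rs f i).

End CRN.

(* Main.v *)
Require Import Defs.
From HB Require Import structures.
From mathcomp Require Import all_boot all_order all_algebra zify.
Set Implicit Arguments. Unset Strict Implicit. Unset Printing Implicit Defensive.
Import Order.TTheory GRing.Theory Num.Theory.
Local Open Scope ring_scope.

Section Aux.
Variables (R : realFieldType) (m : nat).
Local Notation cpx := (complex R m).
Local Notation rct := (reaction R m).

Lemma sum_delta (T : eqType) (s : seq T) (x : T) (F : T -> R) :
  uniq s -> x \in s -> \sum_(y <- s) (y == x)%:R * F y = F x.
Proof.
move=> us xs.
rewrite (big_rem x) //= eqxx mul1r big1_seq ?addr0 // => y /= yr.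
case: eqP yr => [->|] ; last by rewrite mul0r.
by rewrite mem_rem_uniqF.
Qed.

Lemma sum_ord_delta (T : eqType) (x0 : T) (s : seq T) (j0 : 'I_(size s)) (G : 'I_(size s) -> R) :
  uniq s -> \sum_(j < size s) (nth x0 s j == nth x0 s j0)%:R * G j = G j0.
Proof.
move=> us; rewrite (bigD1 j0) //= eqxx mul1r big1 ?addr0 // => j nej.
rewrite nth_uniq //; case: eqP => [/val_inj/eqP|]; [by rewrite (negbTE nej)|by rewrite mul0r].
Qed.

Lemma idx_exists (T : eqType) (x0 : T) (s : seq T) x : x \in s ->
  exists j : 'I_(size s), nth x0 s j = x.
Proof. move=> xs; have h : (index x s < size s)%N by rewrite index_mem.
by exists (Ordinal h); rewrite /= nth_index. Qed.

Lemma mem_complexes (rs : seq rct) r : r \in rs ->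
  (r.1 \in complexes rs) /\ (r.2 \in complexes rs).
Proof.
move=> rr; rewrite /complexes !mem_undup; split; apply/flattenP;
  exists [:: r.1; r.2]; rewrite ?inE ?eqxx ?orbT //;
  by apply/mapP; exists r.
Qed.

Lemma uniq_complexes (rs : seq rct) : uniq (complexes rs).
Proof. exact: undup_uniq. Qed.

Definition incid (rs : seq rct) : 'M[R]_(size rs, ncompl rs) :=
  \matrix_(i, j) ((nth 0 (complexes rs) j == (nth (0,0) rs i).2)%:R
                - (nth 0 (complexes rs) j == (nth (0,0) rs i).1)%:R).

Definition Ymat (rs : seq rct) : 'M[R]_(ncompl rs, m) :=
  \matrix_(j, k) (nth 0 (complexes rs) j) 0 k.

Lemma stoich_factor (rs : seq rct) : stoich rs = incid rs *m Ymat rs.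
Proof.
apply/matrixP => i k; rewrite !mxE.
have ir : nth (0,0) rs i \in rs by rewrite mem_nth.
have [h1 h2] := mem_complexes ir.
have [j1 e1] := idx_exists 0 h1; have [j2 e2] := idx_exists 0 h2.
rewrite /ncompl in j1 j2 e1 e2 *.
under eq_bigr => j _ do rewrite !mxE mulrBl.
rewrite sumrB -e1 -e2.
rewrite (sum_ord_delta _ _ (fun j => (nth 0 (complexes rs) j) 0 k)) ?uniq_complexes //.
rewrite (sum_ord_delta _ _ (fun j => (nth 0 (complexes rs) j) 0 k)) ?uniq_complexes //.
Qed.


Lemma ugraph_sym (rs : seq rct) : symmetric (@ugraph R m rs).
Proof. by move=> x y; rewrite /ugraph orbC. Qed.

Lemma comp_eq (rs : seq rct) (x y a : 'I_(ncompl rs)) :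
  a \in [set j | connect (@ugraph R m rs) x j] ->
  a \in [set j | connect (@ugraph R m rs) y j] ->
  [set j | connect (@ugraph R m rs) x j] = [set j | connect (@ugraph R m rs) y j].
Proof.
have sy := sym_connect_sym (@ugraph_sym rs).
rewrite !inE => xa ya; apply/setP => z; rewrite !inE.
apply/idP/idP => h.
  by apply: connect_trans ya _; apply: connect_trans h; rewrite sy.
by apply: connect_trans xa _; apply: connect_trans h; rewrite sy.
Qed.

Lemma rank_incid (rs : seq rct) : (nlink rs + \rank (incid rs) <= ncompl rs)%N.
Proof.
set n := ncompl rs; set e := @ugraph R m rs.
set P := [set [set j | connect e i j] | i : 'I_n].
have -> : nlink rs = #|P| by [].
pose Ind : 'M[R]_(#|P|, n) := \matrix_(p < #|P|, j < n) (j \in (enum_val p : {set 'I_n}))%:R.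
have compP : forall p : 'I_#|P|, exists i0, (enum_val p : {set 'I_n}) = [set j | connect e i0 j].
  move=> p; have := enum_valP p; rewrite -/P => /imsetP[i0 _ ->]; by exists i0.
have H0 : incid rs *m Ind^T = 0.
  apply/matrixP => i p; rewrite !mxE.
  have ir : nth (0,0) rs i \in rs by rewrite mem_nth.
  have [h1 h2] := mem_complexes ir.
  have [j1 e1] := idx_exists 0 h1; have [j2 e2] := idx_exists 0 h2.
  under eq_bigr => j _ do rewrite !mxE mulrBl.
  rewrite sumrB -e1 -e2.
  rewrite (sum_ord_delta _ _ (fun j => (j \in (enum_val p : {set 'I_n}))%:R)) ?uniq_complexes //.
  rewrite (sum_ord_delta _ _ (fun j => (j \in (enum_val p : {set 'I_n}))%:R)) ?uniq_complexes //.
  have [i0 ->] := compP p; rewrite !inE.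
  have E : e j1 j2.
    by apply/orP; left; rewrite /Defs.rgraph e1 e2 -surjective_pairing.
  have sy := sym_connect_sym (@ugraph_sym rs).
  have -> : connect e i0 j2 = connect e i0 j1; last by rewrite subrr.
  apply/idP/idP => h; first by apply: connect_trans h _; rewrite sy connect1.
  by apply: connect_trans h (connect1 E).
have r1 := mulmx0_rank_max H0; rewrite mxrank_tr in r1.
suff : (#|P| <= \rank Ind)%N by move=> h; rewrite addnC; apply: leq_trans r1; rewrite leq_add2l.
pose pk (q : 'I_#|P|) := [pick x in (enum_val q : {set 'I_n})].
pose Sel : 'M[R]_(n, #|P|) := \matrix_(j, q) (pk q == Some j)%:R.
have pkP : forall q, exists2 j0, pk q = Some j0 & j0 \in (enum_val q : {set 'I_n}).
  move=> q; rewrite /pk; case: pickP => [j0 h|h]; first by exists j0.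
  have [i0 E] := compP q; have := h i0; rewrite E inE connect0 //.
have H1 : Ind *m Sel = 1%:M.
  apply/matrixP => p q; rewrite !mxE.
  have [j0 pj0 j0q] := pkP q.
  rewrite (bigD1 j0) //= !mxE pj0 eqxx mulr1 big1 ?addr0; last first.
    by move=> j nej; rewrite !mxE pj0; case: eqP => [[] /eqP|]; [rewrite eq_sym (negbTE nej)|rewrite mulr0].
  case: (p =P q) => [->|nepq]; first by rewrite j0q.
  case: (boolP (j0 \in (enum_val p : {set 'I_n}))) => // hp.
  have [i1 E1] := compP p; have [i2 E2] := compP q.
  rewrite E1 in hp; rewrite E2 in j0q.
  have := comp_eq hp j0q; rewrite -E1 -E2 => /enum_val_inj; by [].
have := mxrankM_maxl Ind Sel; rewrite H1 mxrank1 //.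
Qed.


Lemma sdim_le (rs : seq rct) : (sdim rs <= \rank (incid rs))%N.
Proof. by rewrite /sdim stoich_factor mxrankM_maxl. Qed.

Lemma def_ge0 (rs : seq rct) : 0 <= deficiency rs.
Proof.
have h1 := rank_incid rs; have h2 := sdim_le rs.
rewrite /deficiency -addrA -opprD subr_ge0 -!PoszD lez_nat.
by apply: leq_trans h1; rewrite leq_add2l.
Qed.

Lemma def_single (r : rct) : r.1 != r.2 -> deficiency [:: r] <= 0.
Proof.
move=> ne.
have c2 : complexes [:: r] = [:: r.1; r.2].
  by rewrite /complexes /= inE (negbTE ne).
have n2 : ncompl [:: r] = 2%N by rewrite /ncompl c2.
have l1 : (1 <= nlink [:: r])%N.
  have h0 : (0 < ncompl [:: r])%N by rewrite n2.
  rewrite /nlink card_gt0; apply/set0Pn.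
  by exists [set j | connect (@ugraph R m [:: r]) (Ordinal h0) j]; apply: imset_f.
have s1 : (1 <= sdim [:: r])%N.
  rewrite /sdim lt0n mxrank_eq0; apply/eqP => h.
  have := congr1 (fun M : 'M_(1, m) => M) h.
  move/matrixP => H; move: ne; rewrite eq_sym -subr_eq0 => /eqP; apply; apply/rowP => j.
  by have := H ord0 j; rewrite !mxE.
rewrite /deficiency n2 -addrA -opprD subr_le0 -PoszD lez_nat.
by rewrite -(addn1 1); apply: leq_add.
Qed.


Definition div (s : seq rct) (w : rct -> R) (y : cpx) :=
  \sum_(r <- s) w r * ((y == r.2)%:R - (y == r.1)%:R).

Lemma row_incid (s : seq rct) (w : rct -> R) (p : 'I_(ncompl s)) :
  ((\row_(j < size s) w (nth (0,0) s j)) *m incid s) 0 p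
  = div s w (nth 0 (complexes s) p).
Proof.
rewrite !mxE /div (big_nth (0,0)) big_mkord; apply: eq_bigr => j _.
by rewrite !mxE.
Qed.

Lemma row_stoich (s : seq rct) (w : rct -> R) :
  (\row_(j < size s) w (nth (0,0) s j)) *m stoich s
  = \sum_(r <- s) w r *: (r.2 - r.1).
Proof.
rewrite mulmx_sum_row (big_nth (0,0)) big_mkord; apply: eq_bigr => j _.
by rewrite !mxE rowK.
Qed.

Lemma pos_sum (T : eqType) (s : seq T) x (F : T -> R) : x \in s ->
  (forall y, y \in s -> 0 <= F y) -> 0 < F x -> 0 < \sum_(y <- s) F y.
Proof.
move=> xs F0 Fx; rewrite (big_rem x) //=; apply: (lt_le_trans Fx).
rewrite lerDl big_seq; apply: sumr_ge0 => y /mem_rem ys; exact: F0.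
Qed.

Lemma wr_of_cut (s : seq rct) :
  (forall a b : 'I_(ncompl s), Defs.rgraph a b -> connect (@Defs.rgraph R m s) b a) ->
  weakly_reversible s.
Proof.
move=> H i j; apply: connect_sub => x y /orP[h|h]; [exact: connect1 | exact: H].
Qed.

Lemma cut (s : seq rct) (w : rct -> R) :
  (forall r, r \in s -> 0 < w r) ->
  (forall y, y \in complexes s -> div s w y = 0) ->
  weakly_reversible s.
Proof.
move=> wpos dz; apply: wr_of_cut => a b ab; apply/negPn/negP => nba.
pose X y := [exists j : 'I_(ncompl s),
               connect (@Defs.rgraph R m s) b j && (nth 0 (complexes s) j == y)].
have key : \sum_(y <- complexes s) (X y)%:R * div s w y = 0.
  by rewrite big_seq big1 // => y ys; rewrite dz ?mulr0.
have key2 : \sum_(y <- complexes s) (X y)%:R * div s w y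
          = \sum_(r <- s) w r * ((X r.2)%:R - (X r.1)%:R).
  rewrite /div; under eq_bigr => y _ do rewrite big_distrr.
  rewrite exchange_big /= !big_seq; apply: eq_bigr => r rs.
  have [h1 h2] := mem_complexes rs.
  under eq_bigr => y _ do rewrite mulrCA.
  rewrite -big_distrr /=; congr (_ * _).
  under eq_bigr => y _ do rewrite mulrBr [_ * (y == r.2)%:R]mulrC [_ * (y == r.1)%:R]mulrC.
  by rewrite sumrB !sum_delta ?uniq_complexes.
have : 0 < \sum_(r <- s) w r * ((X r.2)%:R - (X r.1)%:R); last by rewrite -key2 key ltxx.
apply: (@pos_sum _ _ (nth 0 (complexes s) a, nth 0 (complexes s) b)) => //.
- move=> r rs; apply: mulr_ge0; first exact/ltW/wpos.
  case X1 : (X r.1); last by rewrite subr0 ler0n.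
  suff -> : X r.2 by rewrite subrr.
  have [j /andP[bj /eqP ej]] := existsP X1.
  have [h1 h2] := mem_complexes rs.
  have [j2 e2] := idx_exists 0 h2.
  apply/existsP; exists j2; rewrite e2 eqxx andbT.
  apply: connect_trans bj (connect1 _).
  by rewrite /Defs.rgraph ej e2 -surjective_pairing.
- have Xb : X (nth 0 (complexes s) b).
    by apply/existsP; exists b; rewrite connect0 eqxx.
  have Xa : X (nth 0 (complexes s) a) = false.
    apply/negbTE/existsP => -[j /andP[bj eja]]; move: eja.
    rewrite nth_uniq ?uniq_complexes // => /eqP /val_inj ja.
    by move: nba; rewrite -ja bj.
  by rewrite /= Xb Xa subr0 mulr1; apply: wpos.
Qed.


Fixpoint pw (n : nat) (c : 'I_n -> cpx) (x : 'I_n) (p : seq 'I_n) (rho : rct) : R :=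
  if p is y :: p' then (rho == (c x, c y))%:R + pw c y p' rho else 0.

Lemma pw_ge0 n (c : 'I_n -> cpx) x p rho : 0 <= pw c x p rho.
Proof. by elim: p x => [|y p IH] x //=; apply: addr_ge0 => //; apply: ler0n. Qed.

Lemma div_add (s : seq rct) w1 w2 y :
  div s (fun r => w1 r + w2 r) y = div s w1 y + div s w2 y.
Proof. by rewrite /div -big_split; apply: eq_bigr => r _; rewrite mulrDl. Qed.

Lemma div_ind (s : seq rct) e y : uniq s -> e \in s ->
  div s (fun r => (r == e)%:R) y = (y == e.2)%:R - (y == e.1)%:R.
Proof. by move=> us es; rewrite /div sum_delta. Qed.

Lemma div_zero (s : seq rct) y : div s (fun _ => 0) y = 0.
Proof. by rewrite /div big1 // => r _; rewrite mul0r. Qed.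

Lemma div_pw (s : seq rct) z : uniq s -> forall x p,
  path (@Defs.rgraph R m s) x p ->
  div s (pw (fun j => nth 0 (complexes s) j) x p) z
  = (z == nth 0 (complexes s) (last x p))%:R - (z == nth 0 (complexes s) x)%:R.
Proof.
move=> us x p; elim: p x => [|y p IH] x /=.
  by move=> _; rewrite /div big1 ?subrr // => r _; rewrite mul0r.
case/andP => xy py.
rewrite (div_add s (fun r => (r == _)%:R)) div_ind // IH //=.
by rewrite [LHS]addrC addrA subrK.
Qed.

Lemma circ (s : seq rct) : uniq s -> weakly_reversible s ->
  exists w : rct -> R, [/\ forall rho, 0 <= w rho,
     forall rho, rho \in s -> 0 < w rho & forall z, div s w z = 0].
Proof.
move=> us wr.
suff : forall t : seq rct, {subset t <= s} -> exists w : rct -> R, [/\ forall rho, 0 <= w rho,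
     forall rho, rho \in t -> 0 < w rho & forall z, div s w z = 0].
  by apply.
elim=> [|r t IH] sub.
  by exists (fun _ => 0); split => // z; rewrite div_zero.
have [w [w0 wp wd]] : exists w : rct -> R, [/\ forall rho, 0 <= w rho,
     forall rho, rho \in t -> 0 < w rho & forall z, div s w z = 0].
  by apply: IH => x xt; apply: sub; rewrite inE xt orbT.
have rs : r \in s by apply: sub; rewrite inE eqxx.
have [h1 h2] := mem_complexes rs.
have [a ea] := idx_exists 0 h1; have [b eb] := idx_exists 0 h2.
have ab : Defs.rgraph (a : 'I_(ncompl s)) (b : 'I_(ncompl s)).
  by rewrite /Defs.rgraph ea eb -surjective_pairing.
have : connect (@Defs.rgraph R m s) b a.
  by apply: wr; apply: connect1; rewrite /ugraph ab orbT.
case/connectP => p pp la.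
pose c := fun j : 'I_(ncompl s) => nth 0 (complexes s) j.
exists (fun rho => w rho + ((rho == r)%:R + pw c b p rho)); split.
- move=> rho; apply: addr_ge0 => //; apply: addr_ge0; [exact: ler0n | exact: pw_ge0].
- move=> rho; rewrite inE => /orP[/eqP ->|rt].
    rewrite eqxx; apply: (lt_le_trans ltr01); rewrite addrCA lerDl.
    by apply: addr_ge0 => //; exact: pw_ge0.
  apply: (lt_le_trans (wp _ rt)); rewrite lerDl; apply: addr_ge0; [exact: ler0n | exact: pw_ge0].
- move=> z; rewrite div_add wd add0r (div_add s (fun r0 => (r0 == r)%:R)) div_ind //.
  rewrite div_pw // -la /c -ea -eb.
  by rewrite addrA subrK subrr.
Qed.


Lemma dsum_zero k n (A : 'I_k -> 'M[R]_n) (u : 'I_k -> 'rV[R]_n) :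
  mxdirect (\sum_(i < k) A i) -> (forall i, u i <= A i)%MS ->
  \sum_(i < k) u i = 0 -> forall i, u i = 0.
Proof.
move/mxdirect_sumsP => dx uA su i.
apply/eqP; rewrite -submx0 -(dx i isT) sub_capmx uA /=.
have -> : u i = - \sum_(j | true && (j != i)) u j.
  by apply/eqP; rewrite -addr_eq0 -(bigD1 i) //= su.
by rewrite eqmx_opp; apply: summx_sub_sums => j _.
Qed.

End Aux.

Theorem mainTheorem6 (R : realFieldType) (m : nat) (rs : seq (reaction R m)) :
  is_crn rs ->
  weakly_reversible rs ->
  (forall (k : nat) (f : reaction R m -> 'I_k),
      is_decomposition rs f ->
      deficiency rs = \sum_(i < k) deficiency (block rs f i)) ->
  forall (k : nat) (f : reaction R m -> 'I_k),
    is_decomposition rs f -> independent rs f ->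
    weakly_reversible_decomposition rs f.
Proof.
move=> crn wr hyp k f dec ind i.
case/and3P: crn => us /allP ne _.
have [w [w0 wp wd]] := circ us wr.
have dle : rs != [::] -> deficiency rs <= 0.
  case E: rs => [//|x rs'] _; rewrite -E.
  move: hyp us ne; rewrite E => hyp us ne.
  pose g := fun r : reaction R m => (inord (index r (x :: rs')) : 'I_(size (x :: rs'))).
  have bl : forall j, block (x :: rs') g j = [:: nth x (x :: rs') j].
    move=> j; rewrite /block -(filter_pred1_uniq us (mem_nth x (ltn_ord j))).
    apply: eq_in_filter => r rin; rewrite /g; apply/eqP/eqP => [<-|->].
      by rewrite inordK ?nth_index // -[(size rs').+1]/(size (x :: rs')) index_mem.
    by rewrite index_uniq // inord_val.
  have hd : is_decomposition (x :: rs') g by move=> j; rewrite bl.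
  rewrite (hyp _ g hd); apply: sumr_le0 => j _; rewrite bl.
  by apply: def_single; apply: ne; apply: mem_nth.
apply: (cut (w := w)).
  by move=> r; rewrite mem_filter => /andP[_ /wp].
move=> y yB.
have rs0 : rs != [::].
  by apply/eqP => E; move: yB; rewrite /block E.
have d0 : forall j, deficiency (block rs f j) = 0.
  have := dle rs0; rewrite (hyp k f dec) => le.
  move=> j; apply: (psumr_eq0P (P:=xpredT) (F:=fun j => deficiency (block rs f j))) => //.
    by move=> l _; exact: def_ge0.
  by apply/le_anti; rewrite le sumr_ge0 // => l _; exact: def_ge0.
set B := block rs f i.
have dB := d0 i.
have req : \rank (incid B :&: kermx (Ymat B))%MS = 0%N.
  have h1 := rank_incid B; have h2 := sdim_le B.
  have := mxrank_mul_ker (incid B) (Ymat B).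
  move/eqP: dB; rewrite /deficiency -addrA -opprD subr_eq0 -PoszD => /eqP [] E.
  move: h2; rewrite /sdim stoich_factor => h2.
  rewrite -/B /sdim stoich_factor in E.
  move: (\rank (incid B *m Ymat B)) (\rank (incid B :&: kermx (Ymat B))%MS) h2 E => a b h2 E.
  move: (\rank (incid B)) (nlink B) h1 h2 E => c d h1 h2 E. move: (ncompl B) h1 E => e h1 E. lia.
pose wB := \row_(j < size B) w (nth (0,0) B j).
have su : wB *m stoich B = 0.
  rewrite row_stoich.
  have dd := dsum_zero (proj2 ind).
  apply: (dd (fun j => \sum_(r <- block rs f j) w r *: (r.2 - r.1)) _ _ i).
    by move=> j; rewrite -row_stoich genmxE; apply: submxMl.
  have tot : \sum_(r <- rs) w r *: (r.2 - r.1) = 0.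
    rewrite -row_stoich stoich_factor mulmxA.
    have -> : (\row_(j < size rs) w (nth (0,0) rs j)) *m incid rs = 0.
      by apply/rowP => p; rewrite row_incid wd mxE.
    by rewrite mul0mx.
  rewrite -[RHS]tot; under eq_bigr => j _ do rewrite /block big_filter big_mkcond.
  rewrite exchange_big /=; apply: eq_bigr => r _.
  by rewrite -big_mkcond (big_pred1 (f r)) // => j; rewrite /= eq_sym.
have u0 : wB *m incid B = 0.
  have cz : (incid B :&: kermx (Ymat B))%MS == 0 by rewrite -mxrank_eq0 req.
  have sub : (wB *m incid B <= incid B :&: kermx (Ymat B))%MS.
    rewrite sub_capmx submxMl /=; apply/sub_kermxP.
    by rewrite -mulmxA -stoich_factor.
  by apply/eqP; rewrite -submx0; move: sub; rewrite (eqP cz).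
have [p ep] := idx_exists 0 yB.
by rewrite -ep -row_incid -/wB u0 mxE.
Qed.
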